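(* Let $\mathbb{A}$ be the Rado graph and $\mathbb{F}$ any field. For a finite set $S\subseteq\mathbb{A}$ let $f_S:\mathbb{A}\to\mathbb{F}$ be the indicator function of the set of vertices adjacent to every vertex of $S$, and let $V$ be the linear span of $\{f_S : S\subseteq\mathbb{A}\text{ finite}\}$. Then $V$ is not orbit-finitely spanned; consequently the space of finitely supported functions $\mathbb{A}\to\mathbb{F}$ (equivalently, the space of finitely supported linear maps $\operatorname{Lin}_{\mathbb{F}}\mathbb{A}\to\mathbb{F}$) is not orbit-finitely spanned.
   Context: The Rado graph is the Fraïssé limit of all finite undirected graphs (the countable homogeneous graph into which every finite graph embeds), with automorphism group $\operatorname{Aut}(\mathbb{A})$. $\operatorname{Aut}(\mathbb{A})$ acts on functions $f:\mathbb{A}\to\mathbb{F}$ by $(\pi f)(a)=f(\pi^{-1}a)$; a function is finitely supported if there is a finite $T\subseteq\mathbb{A}$ such that every automorphism fixing $T$ pointwise fixes $f$. A vector space with a linear $\operatorname{Aut}(\mathbb{A})$-action in which every vector is finitely supported is orbit-finitely spanned if it is spanned by an $\operatorname{Aut}(\mathbb{A})$-invariant subset with finitely many orbits (each of whose elements is finitely supported). *)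

(* Defs.v *)
From mathcomp Require Import all_boot all_algebra.
From Stdlib Require List.
Set Implicit Arguments. Unset Strict Implicit. Unset Printing Implicit Defensive.
Import GRing.Theory.
Local Open Scope ring_scope.

(* A countable simple graph (A, E) with the extension property: this is,
   up to isomorphism, exactly the Rado graph. *)
Definition is_rado_graph (A : Type) (E : A -> A -> bool) : Prop :=
  (exists enc : A -> nat, injective enc) /\
  (forall x y, E x y = E y x) /\
  (forall x, E x x = false) /\
  (forall U W : seq A, (forall u, List.In u U -> ~ List.In u W) ->
     exists v, ~ List.In v U /\ ~ List.In v W /\
       (forall u, List.In u U -> E u v) /\
       (forall w, List.In w W -> E w v = false)).

Definition is_aut (A : Type) (E : A -> A -> bool) (p q : A -> A) : Prop :=
  cancel p q /\ cancel q p /\ (forall x y, E (p x) (p y) = E x y).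

(* (pi f)(a) = f (pi^{-1} a), where q = pi^{-1}. *)
Definition act (A F : Type) (q : A -> A) (f : A -> F) : A -> F := fun a => f (q a).

Definition fin_supp (A F : Type) (E : A -> A -> bool) (f : A -> F) : Prop :=
  exists T : seq A, forall p q, is_aut E p q ->
    (forall t, List.In t T -> p t = t) -> act q f = f.

Definition span (A : Type) (F : fieldType) (G : (A -> F) -> Prop) (h : A -> F) : Prop :=
  exists s : seq (F * (A -> F)), (forall x, List.In x s -> G x.2) /\
    forall a, h a = \sum_(x <- s) x.1 * x.2 a.

Definition orbits (A F : Type) (E : A -> A -> bool) (gens : seq (A -> F)) (h : A -> F) : Prop :=
  exists g, List.In g gens /\ exists p q, is_aut E p q /\ h = act q g.

(* V is spanned by an invariant subset with finitely many orbits, made of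
   finitely supported elements of V. *)
Definition orbit_finitely_spanned (A : Type) (F : fieldType) (E : A -> A -> bool)
  (V : (A -> F) -> Prop) : Prop :=
  exists gens : seq (A -> F),
    (forall g, List.In g gens -> V g /\ fin_supp E g) /\
    (forall h, V h <-> span (orbits E gens) h).

Definition fS (A : Type) (F : fieldType) (E : A -> A -> bool) (S : seq A) : A -> F :=
  fun a => if all (fun s => E s a) S then 1 else 0.

Definition Vcommon (A : Type) (F : fieldType) (E : A -> A -> bool) : (A -> F) -> Prop :=
  span (fun g => exists S : seq A, g = fS F E S).

(* Main.v *)
Require Import Defs.
From mathcomp Require Import all_boot all_algebra.
From mathcomp Require Import ring.
From Stdlib Require List ClassicalEpsilon FunctionalExtensionality.
Set Implicit Arguments. Unset Strict Implicit. Unset Printing Implicit Defensive.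
Import GRing.Theory.
Local Open Scope ring_scope.

Section Rado.
Variable A : Type.
Variable E : A -> A -> bool.
Variable F : fieldType.
Hypothesis Esym : forall x y, E x y = E y x.
Hypothesis Eirr : forall x, E x x = false.
Hypothesis Eext : forall U W : seq A, (forall u, List.In u U -> ~ List.In u W) ->
     exists v, ~ List.In v U /\ ~ List.In v W /\
       (forall u, List.In u U -> E u v) /\
       (forall w, List.In w W -> E w v = false).

Definition deq (x y : A) : bool :=
  if ClassicalEpsilon.excluded_middle_informative (x = y) then true else false.
Lemma deqP x y : deq x y = true <-> x = y.
Proof.
rewrite /deq; case: ClassicalEpsilon.excluded_middle_informative => h; split => //.
Qed.
Lemma deqF x y : deq x y = false <-> x <> y.
Proof.
rewrite /deq; case: ClassicalEpsilon.excluded_middle_informative => h; split => //.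
Qed.

Definition memb u (X : seq A) := List.existsb (deq u) X.
Lemma membP u X : memb u X = true <-> List.In u X.
Proof.
rewrite /memb List.existsb_exists; split.
- by move=> [x [Hx /deqP ->]].
- by move=> H; exists u; split => //; apply/deqP.
Qed.
Lemma membF u X : memb u X = false <-> ~ List.In u X.
Proof.
split.
- by move=> H /membP; rewrite H.
- move=> H; case E1: (memb u X) => //; by move/membP: E1.
Qed.

Lemma twin_ex (U : seq A) (s : A) (b : bool) (v : A) :
  exists v', ~ List.In v' U /\ E s v' = b /\
    forall u, List.In u U -> u <> s -> E u v' = E u v.
Proof.
have ss : deq s s = true by apply/deqP.
set P := List.filter (fun u => ~~ deq u s && E u v) U ++ (if b then [:: s] else [::]).
set N := List.filter (fun u => ~~ deq u s && ~~ E u v) U ++ (if b then [::] else [:: s]).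
have disj : forall u, List.In u P -> ~ List.In u N.
  move=> u; rewrite /P /N !List.in_app_iff !List.filter_In.
  case: b {P N} => /=.
  - move=> [[_ /andP [_ H1]] | [Hu | []]] [[_ /andP [H3 H2]] | []].
    + by rewrite H1 in H2.
    + by subst u; move: H3; rewrite ss.
  - move=> [[_ /andP [H3 H1]] | []] [[_ /andP [_ H2]] | [Hu | []]].
    + by rewrite H1 in H2.
    + by subst u; move: H3; rewrite ss.
have [v' [nP [nN [HP HN]]]] := Eext disj.
have sP : b -> List.In s P by rewrite /P => ->; rewrite List.in_app_iff; right; left.
have sN : b = false -> List.In s N by rewrite /N => ->; rewrite List.in_app_iff; right; left.
exists v'; split; [|split].
- move=> inU; case D: (deq v' s).
  + move/deqP: D => D; subst v'.
    clearbody P N; case: b sP sN {disj HP HN} => sP sN.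
    * exact: nP (sP erefl).
    * exact: nN (sN erefl).
  + case Ev: (E v' v).
    * apply: nP; rewrite List.in_app_iff List.filter_In D Ev; by left.
    * apply: nN; rewrite List.in_app_iff List.filter_In D Ev; by left.
- clearbody P N; case: b sP sN {disj} HP HN => sP sN HP HN.
  + exact: HP (sP erefl).
  + exact: HN (sN erefl).
- move=> u inU /deqF nus; case Ev: (E u v).
  + by apply: HP; rewrite List.in_app_iff List.filter_In nus Ev; left.
  + by apply: HN; rewrite List.in_app_iff List.filter_In nus Ev; left.
Qed.

Definition region (U X W : seq A) v := ~ List.In v U /\
  (forall x, List.In x X -> E x v) /\ (forall w, List.In w W -> E w v = false).

Lemma region_ex U X W : (forall x, List.In x X -> ~ List.In x W) ->
  exists v, region U X W v.
Proof.
move=> dXW.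
have disj : forall u, List.In u X -> ~ List.In u (W ++ List.filter (fun u => ~~ memb u X) U).
  move=> u uX; rewrite List.in_app_iff List.filter_In => -[|[_]].
  - exact: dXW.
  - by rewrite (proj2 (membP u X) uX).
have [v [nX [nW [HX HW]]]] := Eext disj.
exists v; split; [|split] => //.
- move=> vU; case M: (memb v X).
  + by move/membP: M.
  + by apply: nW; rewrite List.in_app_iff List.filter_In M; right.
- by move=> w wW; apply: HW; rewrite List.in_app_iff; left.
Qed.


Definition term := ((F * (A -> F)) * seq A)%type.
Fixpoint lsum (ts : seq term) (v : A) : F :=
  match ts with [::] => 0 | t :: r => t.1.1 * t.1.2 v + lsum r v end.

Definition patt (T : seq A) (phi : A -> F) (R : A -> Prop) :=
  forall v w, R v -> R w -> (forall t, List.In t T -> E t v = E t w) -> phi v = phi w.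

Definition twin (U : seq A) (s v : A) : A :=
  ClassicalEpsilon.epsilon (inhabits v) (fun v' => ~ List.In v' U /\ E s v' = false /\
    forall u, List.In u U -> u <> s -> E u v' = E u v).

Lemma twinP U s v : ~ List.In (twin U s v) U /\ E s (twin U s v) = false /\
    forall u, List.In u U -> u <> s -> E u (twin U s v) = E u v.
Proof. exact: (ClassicalEpsilon.epsilon_spec (inhabits v) _ (twin_ex U s false v)). Qed.

Fixpoint tr U s (ts : seq term) : seq term :=
  match ts with
  | [::] => [::]
  | t :: r => if memb s t.2 then ((t.1.1, fun x => t.1.2 x - t.1.2 (twin U s x)), t.2) :: tr U s r
              else tr U s r
  end.

Lemma in_tr U s ts t' : List.In t' (tr U s ts) -> exists t, List.In t ts /\ memb s t.2 = true /\
   t' = ((t.1.1, fun x => t.1.2 x - t.1.2 (twin U s x)), t.2).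
Proof.
elim: ts => //= t r IH.
case M: (memb s t.2) => /=.
- move=> [<-|/IH [t0 [H1 H2]]]; first by exists t; split; [left|].
  by exists t0; split; [right|].
- by move=> /IH [t0 [H1 H2]]; exists t0; split; [right|].
Qed.

Lemma lsum_tr U s ts v : (forall t, List.In t ts -> memb s t.2 = false ->
     t.1.2 v = t.1.2 (twin U s v)) ->
  lsum (tr U s ts) v = lsum ts v - lsum ts (twin U s v).
Proof.
elim: ts => /= [_|t r IH H]; first by rewrite subr0.
have IH' := IH (fun t0 H0 => H t0 (or_intror H0)).
case M: (memb s t.2) => /=; rewrite IH'; first by ring.
rewrite (H t (or_introl erefl) M); ring.
Qed.

Lemma fS_cons s S v : fS F E (s :: S) v = if E s v then fS F E S v else 0.
Proof. by rewrite /fS /=; case: (E s v). Qed.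

Lemma main U : forall S, List.NoDup S -> forall X W (ts : seq term),
 (forall x, List.In x S -> List.In x U /\ ~ List.In x X /\ ~ List.In x W) ->
 (forall x, List.In x X -> List.In x U /\ ~ List.In x W) ->
 (forall x, List.In x W -> List.In x U) ->
 (forall t, List.In t ts -> (forall u, List.In u t.2 -> List.In u U) /\
     ~ (forall x, List.In x S -> List.In x t.2) /\ patt t.2 t.1.2 (region U X W)) ->
 (forall v, region U X W v -> lsum ts v = fS F E S v) -> False.
Proof.
elim=> [|s S IH] ND X W ts HS HX HW Hts Hsum.
- have [v Rv] : exists v, region U X W v by apply: region_ex => x /HX [].
  move: (Hsum v Rv); case: ts Hts {Hsum} => [_|t r Hts].
  + by rewrite /fS /= => /esym/eqP; rewrite oner_eq0.
  + move: (Hts t (or_introl erefl)) => -[_ [H _]] _; by apply: H => x []. 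
have [sU [sX sW]] := HS s (or_introl erefl).
have NDS : List.NoDup S by inversion ND.
have nsS : ~ List.In s S by inversion ND.
have twR : forall v, region U X W v -> region U X W (twin U s v).
  move=> v [vU [vX vW]]; have [tU [ts0 tE]] := twinP U s v.
  split; [|split] => //.
  - move=> x xX; rewrite tE; [exact: vX | exact: (proj1 (HX x xX)) |].
    by move=> exs; subst x.
  - move=> w wW; rewrite tE; [exact: vW | exact: HW |].
    by move=> ews; subst w.
have Rsub : forall v, region U (s :: X) W v -> region U X W v.
  by move=> v [vU [vX vW]]; split; [|split] => // x xX; apply: vX; right.
apply: (IH NDS (s :: X) W (tr U s ts)).
- move=> x xS; have [xU [xX xW]] := HS x (or_intror xS); split; [|split] => //.
  by move=> [exs|//]; subst x.
- move=> x [<-|xX]; first by split.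
  exact: HX.
- exact: HW.
- move=> t' /in_tr [t [tin [Ms ->]]] /=.
  have [TU [nsub pt]] := Hts t tin.
  split; [|split] => //.
  + move=> sub; apply: nsub => x [<-|xS]; first exact/membP.
    exact: sub.
  + move=> v w Rv Rw eq; have Rv' := Rsub v Rv; have Rw' := Rsub w Rw.
    rewrite (pt v w Rv' Rw' eq); congr (_ - _); apply: pt; try exact: twR.
    move=> u uT; have [_ [tv Ev]] := twinP U s v; have [_ [tw Ew]] := twinP U s w.
    case D: (deq u s).
    * by move/deqP: D => ->; rewrite tv tw.
    * by move/deqF: D => D; rewrite Ev ?Ew //; [exact: eq | exact: TU | exact: TU].
- move=> v Rv; have Rv' := Rsub v Rv.
  rewrite lsum_tr.
  + rewrite (Hsum v Rv') (Hsum _ (twR v Rv')) !fS_cons.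
    have [_ [-> _]] := twinP U s v.
    have [_ [vX _]] := Rv; rewrite (vX s (or_introl erefl)) subr0; done.
  + move=> t tin /membF Ms; have [TU [_ pt]] := Hts t tin.
    apply: pt => //; first exact: twR.
    move=> u uT; have [_ [_ Ev]] := twinP U s v.
    rewrite Ev //; first exact: TU.
    by move=> eus; subst u.
Qed.

Definition piso (L : seq (A * A)) := forall a b a' b', List.In (a, b) L -> List.In (a', b') L ->
  (a = a' <-> b = b') /\ E a a' = E b b'.

Lemma forth L a : piso L -> exists b, piso ((a, b) :: L).
Proof.
move=> PL.
case: (ClassicalEpsilon.excluded_middle_informative (exists b, List.In (a, b) L)) => [[b abL]|nab].
  exists b => a1 b1 a2 b2 /= [[<- <-]|H1] [[<- <-]|H2]; by apply: PL.
set Ue := List.map snd (List.filter (fun p => E a p.1) L).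
set We := List.map snd (List.filter (fun p => ~~ E a p.1) L).
have disj : forall u, List.In u Ue -> ~ List.In u We.
  move=> u /List.in_map_iff [[a1 b1] [/= e1 /List.filter_In [i1 /= E1]]].
  move=> /List.in_map_iff [[a2 b2] [/= e2 /List.filter_In [i2 /= E2]]].
  subst b1 b2; have [[_ H] _] := PL _ _ _ _ i1 i2.
  by move: E2; rewrite -(H erefl) E1.
have [b [nU [nW [HU HW]]]] := Eext disj.
have nb : forall a' b', List.In (a', b') L -> a <> a' /\ b <> b'.
  move=> a' b' i; split.
  - by move=> e; subst a'; apply: nab; exists b'.
  - move=> e; subst b'; case Ea: (E a a').
    + apply: nU; apply/List.in_map_iff; exists (a', b); split => //.
      by apply/List.filter_In; split.
    + apply: nW; apply/List.in_map_iff; exists (a', b); split => //.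
      by apply/List.filter_In; split => //=; rewrite Ea.
have key : forall a' b', List.In (a', b') L -> E a a' = E b b'.
  move=> a' b' i; case Ea: (E a a').
  - rewrite Esym; apply/esym/HU; apply/List.in_map_iff; exists (a', b'); split => //.
    by apply/List.filter_In; split.
  - rewrite Esym HW //; apply/List.in_map_iff; exists (a', b'); split => //.
    by apply/List.filter_In; split => //=; rewrite Ea.
exists b => a1 b1 a2 b2 /= [[<- <-]|H1] [[<- <-]|H2].
- by rewrite !Eirr.
- have [n1 n2] := nb _ _ H2; split; last exact: key.
  by split.
- have [n1 n2] := nb _ _ H1; split; last by rewrite Esym (Esym b1); apply: key.
  by split => e; subst; [case: n1 | case: n2].
- exact: PL.
Qed.

Definition swap (L : seq (A * A)) := List.map (fun p => (p.2, p.1)) L.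
Lemma in_swap L x y : List.In (x, y) (swap L) <-> List.In (y, x) L.
Proof.
rewrite /swap List.in_map_iff; split.
- by move=> [[a b] [/= [<- <-] i]].
- by move=> i; exists (y, x).
Qed.
Lemma piso_swap L : piso L -> piso (swap L).
Proof.
move=> PL a b a' b' /in_swap i1 /in_swap i2.
have [[H1 H2] H3] := PL _ _ _ _ i1 i2; split => //; by split.
Qed.

Lemma back L b : piso L -> exists a, piso ((a, b) :: L).
Proof.
move=> /piso_swap /(forth b) [a P]; exists a.
move=> a1 b1 a2 b2 i1 i2.
have j1 : List.In (b1, a1) ((b, a) :: swap L).
  by case: i1 => [[<- <-]|i1]; [left | right; apply/in_swap].
have j2 : List.In (b2, a2) ((b, a) :: swap L).
  by case: i2 => [[<- <-]|i2]; [left | right; apply/in_swap].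
have [[H1 H2] H3] := P _ _ _ _ j1 j2; split => //; by split.
Qed.

Variable enc : A -> nat.
Hypothesis enc_inj : injective enc.

Definition dec (n : nat) : option A :=
  match ClassicalEpsilon.excluded_middle_informative (exists a, enc a = n) with
  | left H => Some (proj1_sig (ClassicalEpsilon.constructive_indefinite_description _ H))
  | right _ => None
  end.
Lemma dec_enc x : dec (enc x) = Some x.
Proof.
rewrite /dec; case: ClassicalEpsilon.excluded_middle_informative => [H|H].
- case: ClassicalEpsilon.constructive_indefinite_description => a /= e.
  by rewrite (enc_inj e).
- by case: H; exists x.
Qed.

Definition fch L a := ClassicalEpsilon.epsilon (inhabits a) (fun b => piso L -> piso ((a, b) :: L)).
Definition bch L b := ClassicalEpsilon.epsilon (inhabits b) (fun a => piso L -> piso ((a, b) :: L)).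
Lemma fchP L a : piso L -> piso ((a, fch L a) :: L).
Proof.
apply: (ClassicalEpsilon.epsilon_spec (inhabits a) (fun b => piso L -> piso ((a, b) :: L))).
case: (ClassicalEpsilon.excluded_middle_informative (piso L)) => [H|H].
- by have [b Hb] := forth a H; exists b.
- by exists a.
Qed.
Lemma bchP L b : piso L -> piso ((bch L b, b) :: L).
Proof.
apply: (ClassicalEpsilon.epsilon_spec (inhabits b) (fun a => piso L -> piso ((a, b) :: L))).
case: (ClassicalEpsilon.excluded_middle_informative (piso L)) => [H|H].
- by have [a Ha] := back b H; exists a.
- by exists b.
Qed.

Definition step n L :=
  match dec n with
  | Some a => let L1 := (a, fch L a) :: L in (bch L1 a, a) :: L1
  | None => L
  end.

Lemma step_piso n L : piso L -> piso (step n L).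
Proof. rewrite /step; case: (dec n) => // a H; apply: bchP; exact: fchP. Qed.
Lemma step_sub n L z : List.In z L -> List.In z (step n L).
Proof. by rewrite /step; case: (dec n) => // a H; right; right. Qed.

Fixpoint Ls (L0 : seq (A * A)) n := match n with 0 => L0 | n.+1 => step n (Ls L0 n) end.

Lemma Ls_piso L0 n : piso L0 -> piso (Ls L0 n).
Proof. by move=> H; elim: n => //= n IH; apply: step_piso. Qed.
Lemma Ls_mono L0 n m z : (n <= m)%N -> List.In z (Ls L0 n) -> List.In z (Ls L0 m).
Proof.
move=> /subnKC <-; elim: (m - n)%N => [|k IH]; first by rewrite addn0.
by move=> i; rewrite addnS /=; apply: step_sub; apply: IH.
Qed.
Lemma Ls_dom L0 x : exists b, List.In (x, b) (Ls L0 (enc x).+1).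
Proof.
rewrite /= /step dec_enc; eexists; right; left; reflexivity.
Qed.
Lemma Ls_rng L0 y : exists a, List.In (a, y) (Ls L0 (enc y).+1).
Proof.
rewrite /= /step dec_enc; eexists; left; reflexivity.
Qed.

Fixpoint look (L : seq (A * A)) x : option A :=
  match L with [::] => None | p :: r => if deq p.1 x then Some p.2 else look r x end.
Lemma lookP L x b : look L x = Some b -> List.In (x, b) L.
Proof.
elim: L => //= [[a c] r IH] /=; case D: (deq a x).
- by move/deqP: D => -> [<-]; left.
- by move=> H; right; apply: IH.
Qed.
Lemma look_ex L x b : List.In (x, b) L -> exists c, look L x = Some c.
Proof.
elim: L => //= [[a c] r IH] /=; case D: (deq a x).
- by move=> _; exists c.
- move=> [[e _]|i]; last exact: IH.
  by subst a; move: D; rewrite (proj2 (deqP x x) erefl).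
Qed.

Definition pmap L0 x := match look (Ls L0 (enc x).+1) x with Some b => b | None => x end.
Definition qmap L0 y := match look (swap (Ls L0 (enc y).+1)) y with Some b => b | None => y end.

Lemma pmapP L0 x : List.In (x, pmap L0 x) (Ls L0 (enc x).+1).
Proof.
have [b i] := Ls_dom L0 x; have [c e] := look_ex i.
by rewrite /pmap e; apply: lookP.
Qed.
Lemma qmapP L0 y : List.In (qmap L0 y, y) (Ls L0 (enc y).+1).
Proof.
have [a i] := Ls_rng L0 y; have /look_ex [c e] : List.In (y, a) (swap (Ls L0 (enc y).+1)).
  by apply/in_swap.
by rewrite /qmap e; apply/in_swap; apply: lookP.
Qed.

Lemma common L0 n1 n2 z1 z2 : List.In z1 (Ls L0 n1) -> List.In z2 (Ls L0 n2) ->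
  List.In z1 (Ls L0 (maxn n1 n2)) /\ List.In z2 (Ls L0 (maxn n1 n2)).
Proof.
move=> i1 i2; split; apply: Ls_mono; try eassumption.
- exact: leq_maxl.
- exact: leq_maxr.
Qed.

Lemma homog T v w : ~ List.In v T -> ~ List.In w T -> (forall t, List.In t T -> E t v = E t w) ->
  exists p q, is_aut E p q /\ (forall t, List.In t T -> p t = t) /\ p v = w.
Proof.
move=> nv nw Hvw.
set L0 := (v, w) :: List.map (fun t => (t, t)) T.
have inL0 : forall a b, List.In (a, b) L0 -> (a = v /\ b = w) \/ (a = b /\ List.In a T).
  move=> a b [[-> ->]|/List.in_map_iff [t [[<- <-] i]]]; [left | right]; by split.
have P0 : piso L0.
  move=> a b a' b' /inL0 [[-> ->]|[-> iT]] /inL0 [[-> ->]|[-> iT']].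
  - by rewrite !Eirr.
  - split; first by split => e; subst; [case: nv | case: nw].
    by rewrite Esym (Esym w); apply: Hvw.
  - split; first by split => e; subst; [case: nv | case: nw].
    by apply: Hvw.
  - by [].
have PL : forall n, piso (Ls L0 n) := fun n => @Ls_piso L0 n P0.
exists (pmap L0), (qmap L0); split; [split; [|split]|split].
- move=> x; have i1 := pmapP L0 x; have i2 := qmapP L0 (pmap L0 x).
  have [j1 j2] := common i1 i2.
  have [[_ H] _] := PL _ _ _ _ _ j1 j2; move: (H erefl) => e; first [by rewrite e | by rewrite -e].
- move=> y; have i2 := pmapP L0 (qmap L0 y); have i1 := qmapP L0 y.
  have [j1 j2] := common i1 i2.
  have [[H _] _] := PL _ _ _ _ _ j1 j2; move: (H erefl) => e; first [by rewrite e | by rewrite -e].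
- move=> x y; have i1 := pmapP L0 x; have i2 := pmapP L0 y.
  have [j1 j2] := common i1 i2.
  have [_ H] := PL _ _ _ _ _ j1 j2; by rewrite H.
- move=> t tT; have i1 := pmapP L0 t.
  have i2 : List.In (t, t) (Ls L0 0) by right; apply/List.in_map_iff; exists t.
  have [j1 j2] := common i1 i2.
  have [[H _] _] := PL _ _ _ _ _ j1 j2; move: (H erefl) => e; first [by rewrite e | by rewrite -e].
- have i1 := pmapP L0 v.
  have i2 : List.In (v, w) (Ls L0 0) by left.
  have [j1 j2] := common i1 i2.
  have [[H _] _] := PL _ _ _ _ _ j1 j2; move: (H erefl) => e; first [by rewrite e | by rewrite -e].
Qed.

Lemma fs_patt T g : (forall p q, is_aut E p q -> (forall t, List.In t T -> p t = t) -> Defs.act q g = g) ->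
  forall v w : A, ~ List.In v T -> ~ List.In w T -> (forall t, List.In t T -> E t v = E t w) ->
  g v = g w :> F.
Proof.
move=> Hg v w nv nw H; have [p [q [aut [fix1 pv]]]] := homog nv nw H.
have [pq _] := aut.
have /(congr1 (fun f => f w)) := Hg p q aut fix1.
by rewrite /act -pv pq.
Qed.

Definition good D (ts : seq term) := forall t, List.In t ts -> (length t.2 <= D)%N /\
  (forall v w, ~ List.In v t.2 -> ~ List.In w t.2 -> (forall u, List.In u t.2 -> E u v = E u w) ->
     t.1.2 v = t.1.2 w).

Lemma good_mono d d' ts : (d <= d')%N -> good d ts -> good d' ts.
Proof. move=> le H t i; have [H1 H2] := H t i; split => //; exact: leq_trans le. Qed.

Definition scale (c : F) (ts : seq term) : seq term := List.map (fun t => ((c * t.1.1, t.1.2), t.2)) ts.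
Lemma lsum_scale c ts a : lsum (scale c ts) a = c * lsum ts a.
Proof. elim: ts => /= [|t r ->]; [by rewrite mulr0 | by rewrite mulrDr mulrA]. Qed.
Lemma good_scale D c ts : good D ts -> good D (scale c ts).
Proof. by move=> H t /List.in_map_iff [t0 [<- i]] /=; apply: H. Qed.
Lemma lsum_cat ts1 ts2 a : lsum (ts1 ++ ts2) a = lsum ts1 a + lsum ts2 a.
Proof. elim: ts1 => /= [|t r ->]; [by rewrite add0r | by rewrite addrA]. Qed.
Lemma good_cat D ts1 ts2 : good D ts1 -> good D ts2 -> good D (ts1 ++ ts2).
Proof. by move=> H1 H2 t /List.in_app_iff [i|i]; [apply: H1 | apply: H2]. Qed.

Definition tmap (p q : A -> A) (ts : seq term) : seq term :=
  List.map (fun t => ((t.1.1, Defs.act q t.1.2), List.map p t.2)) ts.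
Lemma lsum_tmap p q ts a : lsum (tmap p q ts) a = lsum ts (q a).
Proof. by elim: ts => //= t r ->. Qed.
Lemma good_tmap D p q ts : is_aut E p q -> good D ts -> good D (tmap p q ts).
Proof.
move=> [pq [qp pE]] H t /List.in_map_iff [t0 [<- i]] /=.
have [H1 H2] := H t0 i; split; first by rewrite List.length_map.
move=> v w nv nw Hu; rewrite /act; apply: H2.
- by move=> iv; apply: nv; rewrite -(qp v); apply: List.in_map.
- by move=> iw; apply: nw; rewrite -(qp w); apply: List.in_map.
- move=> u iu; have := Hu (p u) (List.in_map _ _ _ iu).
  by rewrite -{1}(qp v) -{1}(qp w) !pE.
Qed.

Lemma sum_good D (s : seq (F * (A -> F))) :
  (forall x, List.In x s -> exists ts, good D ts /\ forall a, x.2 a = lsum ts a) ->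
  exists ts, good D ts /\ forall a, \sum_(x <- s) x.1 * x.2 a = lsum ts a.
Proof.
elim: s => [_|x r IH H].
- by exists [::]; split => // a; rewrite big_nil.
- have [ts1 [g1 e1]] := H x (or_introl erefl).
  have [ts2 [g2 e2]] := IH (fun y i => H y (or_intror i)).
  exists (scale x.1 ts1 ++ ts2); split; first by apply: good_cat => //; apply: good_scale.
  by move=> a; rewrite big_cons lsum_cat lsum_scale e1 e2.
Qed.

Lemma fS_patt S v w : (forall u, List.In u S -> E u v = E u w) -> fS F E S v = fS F E S w.
Proof.
elim: S => // s S IH H; rewrite !fS_cons (H s (or_introl erefl)) IH //.
by move=> u i; apply: H; right.
Qed.

Lemma single_rep g T : (forall v w, ~ List.In v T -> ~ List.In w T ->
     (forall u, List.In u T -> E u v = E u w) -> g v = g w) ->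
  exists ts, good (length T) ts /\ forall a, g a = lsum ts a.
Proof.
move=> H; exists [:: ((1, g), T)]; split.
- by move=> t [<-|[]]; split.
- by move=> a /=; rewrite mul1r addr0.
Qed.

Lemma bound (X : Type) (l : seq X) (Q : nat -> X -> Prop) :
  (forall d d' x, (d <= d')%N -> Q d x -> Q d' x) ->
  (forall x, List.In x l -> exists d, Q d x) -> exists D, forall x, List.In x l -> Q D x.
Proof.
move=> mono; elim: l => [_|x r IH H]; first by exists 0%N.
have [d1 q1] := H x (or_introl erefl).
have [d2 q2] := IH (fun y i => H y (or_intror i)).
exists (maxn d1 d2) => y [<-|i].
- by apply: mono q1; apply: leq_maxl.
- by apply: mono (q2 y i); apply: leq_maxr.
Qed.

Lemma vc_rep g : @Vcommon A F E g -> exists d ts, good d ts /\ forall a, g a = lsum ts a.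
Proof.
move=> [s [Hs e]].
have mono : forall d d' (x : F * (A -> F)), (d <= d')%N ->
    (exists ts, good d ts /\ forall a, x.2 a = lsum ts a) ->
    (exists ts, good d' ts /\ forall a, x.2 a = lsum ts a).
  by move=> d d' x le [ts [g1 e1]]; exists ts; split => //; apply: good_mono le g1.
have [D HD] : exists D, forall x, List.In x s ->
    (exists ts, good D ts /\ forall a, x.2 a = lsum ts a).
  apply: (bound mono) => x i.
  have [S eS] := Hs x i.
  have [ts [g1 e1]] := @single_rep (fS F E S) S (fun v w _ _ => @fS_patt S v w).
  by exists (length S), ts; split => // a; rewrite eS.
have [ts [g1 e1]] := sum_good HD; exists D, ts; split => // a; by rewrite e.
Qed.

Lemma orbit_rep D gens : (forall g, List.In g gens -> exists ts, good D ts /\ forall a, g a = lsum ts a) ->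
  forall h, Defs.span (orbits E gens) h -> exists ts, good D ts /\ forall a, h a = lsum ts a.
Proof.
move=> Hg h [s [Hs e]].
have [ts [g1 e1]] : exists ts, good D ts /\ forall a, \sum_(x <- s) x.1 * x.2 a = lsum ts a.
  apply: sum_good => x /Hs [g [gi [p [q [aut ex]]]]].
  have [ts [g1 e1]] := Hg g gi.
  exists (tmap p q ts); split; first exact: good_tmap.
  by move=> a; rewrite lsum_tmap ex /Defs.act e1.
by exists ts; split => // a; rewrite e.
Qed.

Lemma exists_nodup n : exists S : seq A, List.NoDup S /\ length S = n.
Proof.
elim: n => [|n [S [ND L]]]; first by exists [::]; split => //; constructor.
have [v [_ [nv _]]] := @Eext [::] S (fun u (i : List.In u [::]) => match i with end).
by exists (v :: S); split; [constructor | rewrite /= L].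
Qed.

Lemma no_rep D S0 ts : List.NoDup S0 -> length S0 = D.+1 -> good D ts ->
  (forall a, fS F E S0 a = lsum ts a) -> False.
Proof.
move=> ND L G e.
set U := S0 ++ List.concat (List.map snd ts).
have TU : forall t, List.In t ts -> forall u, List.In u t.2 -> List.In u U.
  move=> t i u iu; apply List.in_app_iff; right; apply List.in_concat.
  by exists t.2; split => //; apply: List.in_map.
apply: (@main U S0 ND [::] [::] ts).
- by move=> x i; split; [apply List.in_app_iff; left | split => -[]].
- by [].
- by [].
- move=> t i; have [G1 G2] := G t i; split; [exact: TU|split].
  + move=> sub; have := List.NoDup_incl_length ND sub.
    rewrite L => /leP le1; have := leq_trans le1 G1; by rewrite ltnn.
  + move=> v w [nv _] [nw _] Hu; apply: G2 => // iv.
    * by apply: nv; exact: TU iv.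
    * by apply: nw; exact: TU iv.
- by move=> v _; rewrite e.
Qed.

End Rado.

Theorem mainTheorem18 (A : Type) (E : A -> A -> bool) (F : fieldType) :
  is_rado_graph E ->
  ~ @orbit_finitely_spanned A F E (@Vcommon A F E) /\
  ~ @orbit_finitely_spanned A F E (fun f : A -> F => @fin_supp A F E f).
Proof.
move=> [[enc inj] [Esym [Eirr Eext]]].
have fS_fs : forall S0, fin_supp E (fS F E S0).
  move=> S0; exists S0 => p q [pq [qp pE]] fix1; apply: FunctionalExtensionality.functional_extensionality => a.
  rewrite /Defs.act; apply: fS_patt => u i.
  by rewrite -(pE u (q a)) qp fix1.
split.
- move=> [gens [Hg Hsp]].
  have mono : forall d d' (g : A -> F), (d <= d')%N ->
      (exists ts, good E d ts /\ forall a, g a = lsum ts a) ->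
      (exists ts, good E d' ts /\ forall a, g a = lsum ts a).
    by move=> d d' x le [ts [g1 e1]]; exists ts; split => //; apply: good_mono le g1.
  have [D HD] := bound mono (fun g i => vc_rep (proj1 (Hg g i))).
  have [S0 [ND L]] := exists_nodup Eext D.+1.
  have Vc : @Vcommon A F E (fS F E S0).
    exists [:: (1, fS F E S0)]; split.
    + by move=> x [<-|[]]; exists S0.
    + by move=> a; rewrite big_seq1 mul1r.
  have [ts [g1 e1]] := orbit_rep HD (proj1 (Hsp _) Vc).
  exact: (no_rep Eext ND L g1 e1).
- move=> [gens [Hg Hsp]].
  have mono : forall d d' (g : A -> F), (d <= d')%N ->
      (exists ts, good E d ts /\ forall a, g a = lsum ts a) ->
      (exists ts, good E d' ts /\ forall a, g a = lsum ts a).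
    by move=> d d' x le [ts [g1 e1]]; exists ts; split => //; apply: good_mono le g1.
  have [D HD] : exists D, forall g, List.In g gens -> exists ts, good E D ts /\ forall a, g a = lsum ts a.
    apply: (bound mono) => g i.
    have [T HT] := proj2 (Hg g i).
    have := @single_rep A E F g T (fs_patt Esym Eirr Eext inj HT).
    by move=> [ts H]; exists (length T), ts.
  have [S0 [ND L]] := exists_nodup Eext D.+1.
  have [ts [g1 e1]] := orbit_rep HD (proj1 (Hsp _) (fS_fs S0)).
  exact: (no_rep Eext ND L g1 e1).
Qed.
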